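(* Let $n\ge2$ and let $Q$ be the $n\times n$ anti-comonotone checkerboard copula ($Q_{ij}=\frac1n$ if $i+j=n+1$, $Q_{ij}=0$ otherwise). For every $n\times n$ checkerboard copula $P\neq Q$, the function $\alpha\mapsto\tau(\alpha P+(1-\alpha)Q)$ is strictly increasing on $[0,1]$.
   Context: An $n\times n$ checkerboard copula is a real $n\times n$ matrix with nonnegative entries whose row and column sums all equal $\frac1n$. $\Xi=(\xi_{ij})$ with $\xi_{ij}=1$ if $i=j$, $2$ if $i>j$, $0$ if $i<j$. For an $n\times n$ matrix $M$, $\tau(M)=1-\mathrm{tr}(\Xi M\Xi M^\top)$ (Kendall's $\tau$ of a checkerboard copula). *)

(* Defs.v *)
From mathcomp Require Import all_boot all_order all_algebra.
Set Implicit Arguments. Unset Strict Implicit. Unset Printing Implicit Defensive.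
Import Order.TTheory GRing.Theory Num.Theory.
Local Open Scope ring_scope.

Definition checkerboard_copula (R : realFieldType) (n : nat) (M : 'M[R]_n) : Prop :=
  (forall i j, 0 <= M i j) /\
  (forall i, \sum_j M i j = n%:R^-1) /\
  (forall j, \sum_i M i j = n%:R^-1).

Definition Xi (R : realFieldType) (n : nat) : 'M[R]_n :=
  \matrix_(i, j) (if i == j then 1 else if (j < i)%N then 2 else 0).

Definition tau (R : realFieldType) (n : nat) (M : 'M[R]_n) : R :=
  1 - \tr (Xi R n *m M *m Xi R n *m M^T).

(* Anti-comonotone checkerboard copula: Q_ij = 1/n if i + j = n + 1 (1-based),
   i.e. i + j = n - 1 with 0-based indices, and 0 otherwise. *)
Definition anti_comonotone (R : realFieldType) (n : nat) : 'M[R]_n :=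
  \matrix_(i, j) (if (i + j == n.-1)%N then n%:R^-1 else 0).

(* Main.v *)
Require Import Defs.
From mathcomp Require Import all_boot all_order all_algebra.
From mathcomp Require Import zify ring lra.
Set Implicit Arguments. Unset Strict Implicit. Unset Printing Implicit Defensive.
Import Order.TTheory GRing.Theory Num.Theory.
Local Open Scope ring_scope.

Definition ind (R : realFieldType) (b : bool) : R := if b then 1 else 0.
Definition sgn (R : realFieldType) (i j : nat) : R :=
  if (j < i)%N then 1 else if (i < j)%N then -1 else 0.
Definition Sg (R : realFieldType) n : 'M[R]_n := \matrix_(i, j) sgn R i j.
Definition Jm (R : realFieldType) n : 'M[R]_n := const_mx 1.
Definition frob (R : realFieldType) n (X Y : 'M[R]_n) : R := \tr (X *m Y^T).

Lemma Xi_JS (R : realFieldType) n : Xi R n = Jm R n + Sg R n.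
Proof.
apply/matrixP => i j; rewrite !mxE /sgn.
case: (altP (i =P j)) => [->|ne]; first by rewrite ltnn addr0.
have ne' : (i : nat) != j by [].
by case: ltngtP ne' => h _ //=; rewrite subrr.
Qed.

Lemma Sg_tr (R : realFieldType) n : (Sg R n)^T = - Sg R n.
Proof.
apply/matrixP => i j; rewrite !mxE /sgn.
case: ltngtP => h //=; rewrite ?opprK ?oppr0 //.
Qed.

Lemma Jm_tr (R : realFieldType) n : (Jm R n)^T = Jm R n.
Proof. by apply/matrixP => i j; rewrite !mxE. Qed.

Lemma frobC (R : realFieldType) n (X Y : 'M[R]_n) : frob X Y = frob Y X.
Proof. by rewrite /frob -mxtrace_tr trmx_mul trmxK. Qed.

Lemma frobDl (R : realFieldType) n (X Y Z : 'M[R]_n) : frob (X + Y) Z = frob X Z + frob Y Z.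
Proof. by rewrite /frob mulmxDl mxtraceD. Qed.

Lemma frobZl (R : realFieldType) n a (X Z : 'M[R]_n) : frob (a *: X) Z = a * frob X Z.
Proof. by rewrite /frob -scalemxAl mxtraceZ. Qed.

Lemma frobDr (R : realFieldType) n (X Y Z : 'M[R]_n) : frob Z (X + Y) = frob Z X + frob Z Y.
Proof. by rewrite frobC frobDl !(frobC Z). Qed.

Lemma frobZr (R : realFieldType) n a (X Z : 'M[R]_n) : frob Z (a *: X) = a * frob Z X.
Proof. by rewrite frobC frobZl frobC. Qed.

Lemma frobBr (R : realFieldType) n (X Y Z : 'M[R]_n) : frob Z (X - Y) = frob Z X - frob Z Y.
Proof. by rewrite -scaleN1r frobDr frobZr; ring. Qed.

Lemma frob_adj (R : realFieldType) n (A X B Y : 'M[R]_n) :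
  frob (A *m X *m B) Y = frob X (A^T *m Y *m B^T).
Proof.
rewrite /frob !trmx_mul !trmxK -!mulmxA mxtrace_mulC -!mulmxA.
done.
Qed.

Lemma frobE (R : realFieldType) n (X Y : 'M[R]_n) :
  frob X Y = \sum_i \sum_j X i j * Y i j.
Proof.
rewrite /frob /mxtrace; apply: eq_bigr => i _; rewrite mxE.
by apply: eq_bigr => j _; rewrite mxE.
Qed.

Lemma QE (R : realFieldType) n (i j : 'I_n) :
  anti_comonotone R n i j = if rev_ord i == j then n%:R^-1 else 0.
Proof.
rewrite mxE; congr (if _ then _ else _).
rewrite -val_eqE /=; have := ltn_ord i; have := ltn_ord j => *.
apply/eqP/eqP; lia.
Qed.

Lemma rev_eqC n (i j : 'I_n) : (rev_ord i == j) = (i == rev_ord j).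
Proof. by rewrite -{1}(rev_ordK j) (inj_eq rev_ord_inj). Qed.

Lemma Q_row (R : realFieldType) n (i : 'I_n) :
  \sum_j anti_comonotone R n i j = n%:R^-1.
Proof.
rewrite (bigD1 (rev_ord i)) //= QE eqxx big1 ?addr0 // => j hj.
by rewrite QE eq_sym (negbTE hj).
Qed.

Lemma Q_col (R : realFieldType) n (j : 'I_n) :
  \sum_i anti_comonotone R n i j = n%:R^-1.
Proof.
rewrite (bigD1 (rev_ord j)) //= QE rev_ordK eqxx big1 ?addr0 // => i hi.
by rewrite QE rev_eqC (negbTE hi).
Qed.

Lemma Q_ge0 (R : realFieldType) n (i j : 'I_n) : 0 <= anti_comonotone R n i j.
Proof. by rewrite QE; case: ifP => // _; rewrite invr_ge0 ler0n. Qed.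

Lemma subE (R : realFieldType) n (A B : 'M[R]_n) j k : (A - B) j k = A j k - B j k.
Proof. by rewrite !mxE. Qed.

Lemma JD0 (R : realFieldType) n (P : 'M[R]_n) :
  checkerboard_copula P -> Jm R n *m (P - anti_comonotone R n) = 0.
Proof.
move=> [_ [_ hc]]; apply/matrixP => i k; rewrite [LHS]mxE [RHS]mxE.
under eq_bigr do rewrite [Jm _ _ _ _]mxE mul1r subE.
by rewrite sumrB hc Q_col subrr.
Qed.

Lemma DJ0 (R : realFieldType) n (P : 'M[R]_n) :
  checkerboard_copula P -> (P - anti_comonotone R n) *m Jm R n = 0.
Proof.
move=> [_ [hr _]]; apply/matrixP => i k; rewrite [LHS]mxE [RHS]mxE.
under eq_bigr do rewrite [Jm _ _ _ _]mxE mulr1 subE.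
by rewrite sumrB hr Q_row subrr.
Qed.

Lemma XDX (R : realFieldType) n (P : 'M[R]_n) :
  checkerboard_copula P ->
  Xi R n *m (P - anti_comonotone R n) *m Xi R n =
  Sg R n *m (P - anti_comonotone R n) *m Sg R n.
Proof.
move=> hP; rewrite Xi_JS mulmxDl JD0 // add0r mulmxDr -mulmxA DJ0 //.
by rewrite mulmx0 add0r.
Qed.

Lemma trD (R : realFieldType) n (A B : 'M[R]_n) : (A + B)^T = A^T + B^T.
Proof. by rewrite linearD. Qed.

Lemma XtDXt (R : realFieldType) n (P : 'M[R]_n) :
  checkerboard_copula P ->
  (Xi R n)^T *m (P - anti_comonotone R n) *m (Xi R n)^T =
  Sg R n *m (P - anti_comonotone R n) *m Sg R n.
Proof.
move=> hP; rewrite Xi_JS trD Jm_tr Sg_tr mulmxDl JD0 // add0r mulmxDr -mulmxA DJ0 //.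
by rewrite mulmx0 add0r mulNmx mulNmx mulmxN opprK.
Qed.

Lemma SQS (R : realFieldType) n : (Sg R n)^T *m anti_comonotone R n *m (Sg R n)^T
  = Sg R n *m anti_comonotone R n *m Sg R n.
Proof. by rewrite Sg_tr mulNmx mulmxN mulNmx opprK. Qed.

Definition rho (R : realFieldType) (c : bool) (a b : R) := if c then a * b else (1 - a) * (1 - b).
Definition cA (R : realFieldType) (c : bool) (a : R) := if c then 0 else 1 - a.
Definition cB (R : realFieldType) (c : bool) (b : R) := if c then 0 else - b.

Lemma corner (R : realFieldType) c (a b : R) : a * b = rho c a b - cA c a - cB c b.
Proof. by case: c; rewrite /rho /cA /cB; ring. Qed.

Definition Wf (R : realFieldType) n (i l j k : nat) : R :=
  rho (i + l <= n)%N (ind R (j < i)%N) (ind R (k < l)%N) +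
  rho (i.+1 + l <= n)%N (ind R (j < i.+1)%N) (ind R (k < l)%N) +
  rho (i + l.+1 <= n)%N (ind R (j < i)%N) (ind R (k < l.+1)%N) +
  rho (i.+1 + l.+1 <= n)%N (ind R (j < i.+1)%N) (ind R (k < l.+1)%N).
Definition Af (R : realFieldType) n (i l j : nat) : R :=
  ind R (j < i)%N + ind R (j < i.+1)%N - 1 +
  cA (i + l <= n)%N (ind R (j < i)%N) + cA (i.+1 + l <= n)%N (ind R (j < i.+1)%N) +
  cA (i + l.+1 <= n)%N (ind R (j < i)%N) + cA (i.+1 + l.+1 <= n)%N (ind R (j < i.+1)%N).
Definition Bf (R : realFieldType) n (i l k : nat) : R :=
  ind R (k < l)%N + ind R (k < l.+1)%N +
  cB (i + l <= n)%N (ind R (k < l)%N) + cB (i.+1 + l <= n)%N (ind R (k < l)%N) +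
  cB (i + l.+1 <= n)%N (ind R (k < l.+1)%N) + cB (i.+1 + l.+1 <= n)%N (ind R (k < l.+1)%N).

Lemma sgn_ind1 (R : realFieldType) i j : sgn R i j = ind R (j < i)%N + ind R (j < i.+1)%N - 1.
Proof. rewrite /sgn /ind ltnS; case: (ltngtP j i) => _ /=; ring. Qed.

Lemma sgn_ind2 (R : realFieldType) k l : sgn R k l = 1 - ind R (k < l)%N - ind R (k < l.+1)%N.
Proof. rewrite /sgn /ind ltnS; case: (ltngtP k l) => _ /=; ring. Qed.

Lemma key (R : realFieldType) n i l j k :
  sgn R i j * sgn R k l = Af R n i l j + Bf R n i l k - Wf R n i l j k.
Proof.
rewrite sgn_ind1 sgn_ind2 /Af /Bf /Wf.
move: (ind R (j < i)%N) (ind R (j < i.+1)%N) (ind R (k < l)%N) (ind R (k < l.+1)%N).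
move: (i + l <= n)%N (i.+1 + l <= n)%N (i + l.+1 <= n)%N (i.+1 + l.+1 <= n)%N.
move=> c1 c2 c3 c4 a0 a1 b0 b1.
have := corner c1 a0 b0; have := corner c2 a1 b0; have := corner c3 a0 b1;
have := corner c4 a1 b1.
lra.
Qed.

Lemma rho_ge0 (R : realFieldType) c b1 b2 : 0 <= rho c (ind R b1) (ind R b2).
Proof. by case: c; case: b1; case: b2; rewrite /rho /ind /=; lra. Qed.

Lemma Wf_ge0 (R : realFieldType) n i l j k : 0 <= Wf R n i l j k.
Proof. by rewrite /Wf !addr_ge0 // rho_ge0. Qed.

Lemma rho0 (R : realFieldType) n x y j k : (j + k).+1 = n ->
  rho (x + y <= n)%N (ind R (j < x)%N) (ind R (k < y)%N) = 0.
Proof.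
move=> h; rewrite /rho /ind.
case: (leqP (x + y) n) => h1; case: (ltnP j x) => h2; case: (ltnP k y) => h3;
  try lia; rewrite /=; ring.
Qed.

Lemma Wf0 (R : realFieldType) n i l j k : (j + k).+1 = n -> Wf R n i l j k = 0.
Proof. by move=> h; rewrite /Wf !(rho0 _ _ _ h) !addr0. Qed.

Lemma D_row (R : realFieldType) n (P : 'M[R]_n) : checkerboard_copula P ->
  forall j, \sum_k (P - anti_comonotone R n) j k = 0.
Proof.
move=> [_ [hr _]] j; under eq_bigr do rewrite subE.
by rewrite sumrB hr Q_row subrr.
Qed.

Lemma D_col (R : realFieldType) n (P : 'M[R]_n) : checkerboard_copula P ->
  forall k, \sum_j (P - anti_comonotone R n) j k = 0.
Proof.
move=> [_ [_ hc]] k; under eq_bigr do rewrite subE.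
by rewrite sumrB hc Q_col subrr.
Qed.

Lemma Phi_le0 (R : realFieldType) n (P : 'M[R]_n) : checkerboard_copula P ->
  forall i l, (Sg R n *m (P - anti_comonotone R n) *m Sg R n) i l <= 0.
Proof.
move=> hP i l; set D := P - anti_comonotone R n.
rewrite mxE.
under eq_bigr => k _ do rewrite mxE big_distrl /=.
have -> : \sum_(k < n) \sum_(j < n) Sg R n i j * D j k * Sg R n k l =
   \sum_(k < n) \sum_(j < n) Af R n i l j * D j k + \sum_(k < n) \sum_(j < n) Bf R n i l k * D j k
   - \sum_(k < n) \sum_(j < n) Wf R n i l j k * D j k.
  rewrite -big_split -sumrB; apply: eq_bigr => k _.
  rewrite -big_split -sumrB; apply: eq_bigr => j _.
  rewrite !mxE /=.
  by rewrite mulrAC (key R n); ring.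
rewrite [X in X + _ - _](exchange_big _ _ _ _ _ (fun (k j : 'I_n) => Af R n i l j * D j k)) /= big1 ?add0r; last first.
  by move=> j _; rewrite -big_distrr /= D_row // mulr0.
rewrite big1 ?add0r; last first.
  by move=> k _; rewrite -big_distrr /= D_col // mulr0.
rewrite oppr_le0; apply: sumr_ge0 => k _; apply: sumr_ge0 => j _.
rewrite /D subE mulrBr.
have -> : Wf R n i l j k * anti_comonotone R n j k = 0.
  rewrite QE; case: eqP => [<-|_]; last by rewrite mulr0.
  rewrite Wf0 ?mul0r //= ; have := ltn_ord j; lia.
rewrite subr0 mulr_ge0 ?Wf_ge0 //; by case: hP.
Qed.

Lemma SgE (R : realFieldType) n (i j : 'I_n) : Sg R n i j = sgn R i j.
Proof. by rewrite mxE. Qed.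

Definition psi (R : realFieldType) n (j k : 'I_n) : R :=
  \sum_(i < n) sgn R j i * sgn R (rev_ord i) k.

Lemma Psi_E (R : realFieldType) n (j k : 'I_n) :
  (Sg R n *m anti_comonotone R n *m Sg R n) j k = n%:R^-1 * psi R j k.
Proof.
rewrite mxE.
under eq_bigr => l _ do rewrite mxE big_distrl /=.
rewrite (exchange_big _ _ _ _ _ (fun (l i : 'I_n) => Sg R n j i * anti_comonotone R n i l * Sg R n l k)) /=.
rewrite /psi big_distrr /=; apply: eq_bigr => i _.
rewrite (bigD1 (rev_ord i)) //= big1 ?addr0.
  by rewrite QE eqxx !SgE; ring.
by move=> l hl; rewrite QE eq_sym (negbTE hl) mulr0 mul0r.
Qed.

Lemma sgnnn (R : realFieldType) a : sgn R a a = 0.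
Proof. by rewrite /sgn ltnn. Qed.

Lemma sgn_prod_le1 (R : realFieldType) a b c d : sgn R a b * sgn R c d <= 1.
Proof. by rewrite /sgn; repeat (case: ifP => _); lra. Qed.

Lemma term_le (R : realFieldType) n (j k i : 'I_n) :
  sgn R j i * sgn R (rev_ord i) k <=
  ind R (i != j) - ind R ((i == rev_ord k) && (rev_ord j != k)).
Proof.
case: (altP (i =P j)) => [->|nij].
  by rewrite sgnnn mul0r /ind /= -rev_eqC; case: (rev_ord j == k); rewrite /= ?andbF; lra.
case: (altP (i =P rev_ord k)) => [eik|nik].
  have -> : rev_ord j != k.
    apply/negP => /eqP e; move: nij; rewrite eik -e rev_ordK eqxx //.
  by rewrite eik rev_ordK sgnnn mulr0 /ind /=; lra.
rewrite /ind /=; have := sgn_prod_le1 R j i (rev_ord i) k; lra.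
Qed.

Lemma sum_ind_neq (R : realFieldType) n (j : 'I_n) : \sum_i ind R (i != j) = n%:R - 1.
Proof.
have -> : \sum_i ind R (i != j) = \sum_i (1 - ind R (i == j)).
  by apply: eq_bigr => i _; rewrite /ind; case: (i == j); rewrite /=; ring.
rewrite sumrB sumr_const card_ord (bigD1 j) //= big1 ?addr0.
  by rewrite /ind eqxx.
by move=> i /negbTE ->.
Qed.

Lemma sum_ind_eq_and (R : realFieldType) n (k : 'I_n) c :
  \sum_(i < n) ind R ((i == k) && c) = ind R c.
Proof.
case: c; last by rewrite big1 // => i _; rewrite andbF.
rewrite (bigD1 k) //= big1 ?addr0; first by rewrite eqxx.
by move=> i /negbTE ->.
Qed.

Lemma psi_le (R : realFieldType) n (j k : 'I_n) :
  psi R j k <= (n%:R - 1) - ind R (rev_ord j != k).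
Proof.
rewrite /psi; apply: le_trans (ler_sum _ (fun i _ => term_le R j k i)) _.
by rewrite sumrB sum_ind_neq sum_ind_eq_and.
Qed.

Lemma sgn_rev (R : realFieldType) n (i j : 'I_n) :
  sgn R (rev_ord i) (rev_ord j) = sgn R j i.
Proof.
rewrite /sgn /=; have := ltn_ord i; have := ltn_ord j => hi hj.
have -> : (n - j.+1 < n - i.+1)%N = (i < j)%N by apply/idP/idP; lia.
by have -> : (n - i.+1 < n - j.+1)%N = (j < i)%N by apply/idP/idP; lia.
Qed.

Lemma psi_anti (R : realFieldType) n (j : 'I_n) : psi R j (rev_ord j) = n%:R - 1.
Proof.
rewrite /psi -(sum_ind_neq R j); apply: eq_bigr => i _.
rewrite sgn_rev /ind -val_eqE /sgn.
by case: (ltngtP i j) => _ /=; ring.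
Qed.

Lemma E_pos (R : realFieldType) n (P : 'M[R]_n) : checkerboard_copula P ->
  P <> anti_comonotone R n ->
  0 < \sum_(j < n) \sum_(k < n) P j k * ind R (rev_ord j != k).
Proof.
move=> hP hne; have [hge [hr hc]] := hP.
have t0 : forall j k, 0 <= P j k * ind R (rev_ord j != k).
  by move=> j k; rewrite mulr_ge0 // /ind; case: ifP.
rewrite lt_def sumr_ge0 ?andbT; last by move=> j _; apply: sumr_ge0.
apply/negP => /eqP h0; apply: hne.
have z : forall j k, P j k * ind R (rev_ord j != k) = 0.
  move=> j k.
  have h1 := (psumr_eq0P (fun j _ => sumr_ge0 _ (fun k _ => t0 j k)) h0) j isT.
  exact: (psumr_eq0P (fun k _ => t0 j k) h1) k isT.
have z' : forall j k, rev_ord j != k -> P j k = 0.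
  by move=> j k hjk; have := z j k; rewrite /ind hjk mulr1.
apply/matrixP => j k; rewrite QE.
case: (altP (rev_ord j =P k)) => [<-|ne]; last by rewrite z'.
have := hr j; rewrite (bigD1 (rev_ord j)) //= big1 ?addr0 //.
by move=> k' hk; apply: z'; rewrite eq_sym.
Qed.

Lemma u_lt0 (R : realFieldType) n (P : 'M[R]_n) : (2 <= n)%N -> checkerboard_copula P ->
  P <> anti_comonotone R n ->
  frob (Sg R n *m (P - anti_comonotone R n) *m Sg R n) (anti_comonotone R n) < 0.
Proof.
move=> hn hP hne; have [hge [hr hc]] := hP.
rewrite frob_adj SQS frobE.
set D := P - anti_comonotone R n.
under eq_bigr => j _ do under eq_bigr => k _ do rewrite Psi_E.
have hn0 : 0 < n%:R^-1 :> R by rewrite invr_gt0 ltr0n; lia.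
have -> : \sum_(j < n) \sum_(k < n) D j k * (n%:R^-1 * psi R j k) =
   n%:R^-1 * \sum_(j < n) \sum_(k < n) D j k * psi R j k.
  rewrite big_distrr; apply: eq_bigr => j _; rewrite big_distrr; apply: eq_bigr => k _ /=.
  ring.
rewrite pmulr_rlt0 //.
apply: (@le_lt_trans _ _ (- \sum_(j < n) \sum_(k < n) P j k * ind R (rev_ord j != k))); last first.
  by rewrite oppr_lt0 E_pos.
apply: (@le_trans _ _ (\sum_(j < n) \sum_(k < n)
   ((n%:R - 1) * D j k - P j k * ind R (rev_ord j != k)))).
  apply: ler_sum => j _; apply: ler_sum => k _.
  rewrite /D subE.
  have hq : anti_comonotone R n j k * psi R j k = anti_comonotone R n j k * (n%:R - 1).
    rewrite QE; case: eqP => [<-|_]; last by rewrite !mul0r.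
    by rewrite psi_anti.
  have hp := psi_le R j k.
  have hp0 := hge j k.
  rewrite mulrBl hq.
  have : P j k * psi R j k <= P j k * ((n%:R - 1) - ind R (rev_ord j != k)).
    by rewrite ler_wpM2l.
  lra.
rewrite -sumrN; apply: ler_sum => j _.
by rewrite sumrB -big_distrr /= D_row // mulr0 sub0r.
Qed.

Lemma p_le0 (R : realFieldType) n (P : 'M[R]_n) : checkerboard_copula P ->
  frob (Sg R n *m (P - anti_comonotone R n) *m Sg R n) P <= 0.
Proof.
move=> hP; rewrite frobE; apply: sumr_le0 => i _; apply: sumr_le0 => l _.
by rewrite mulr_le0_ge0 // ?Phi_le0 //; case: hP.
Qed.

Lemma tauM (R : realFieldType) n (P : 'M[R]_n) (a : R) : checkerboard_copula P ->
  let Q := anti_comonotone R n in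
  let Phi := Sg R n *m (P - Q) *m Sg R n in
  tau (a *: P + (1 - a) *: Q) =
  1 - frob (Xi R n *m Q *m Xi R n) Q - 2 * a * frob Phi Q - a ^+ 2 * (frob Phi P - frob Phi Q).
Proof.
move=> hP Q Phi.
have -> : a *: P + (1 - a) *: Q = Q + a *: (P - Q).
  by apply/matrixP => i j; rewrite !mxE; ring.
rewrite /tau -/(frob _ _).
rewrite mulmxDr mulmxDl -scalemxAr -scalemxAl XDX //.
rewrite frobDl !frobDr !frobZl !frobZr.
have e : frob (Xi R n *m Q *m Xi R n) (P - Q) = frob Phi Q.
  by rewrite frob_adj XtDXt // frobC.
rewrite e frobBr -/Phi; ring.
Qed.

Theorem lemma10 (R : realFieldType) (n : nat) (Hn : (2 <= n)%N) (P : 'M[R]_n) :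
  checkerboard_copula P -> P <> anti_comonotone R n ->
  forall a b : R, 0 <= a -> a < b -> b <= 1 ->
    tau (a *: P + (1 - a) *: anti_comonotone R n) <
    tau (b *: P + (1 - b) *: anti_comonotone R n).
Proof.
move=> hP hne a b ha hab hb.
rewrite !tauM //=.
have hu := u_lt0 Hn hP hne.
have hp := p_le0 hP.
set u := frob _ (anti_comonotone R n) in hu *.
set p := frob _ P in hp *.
have h1 : 0 < (b - a) * ((2 - a - b) * (- u)).
  by apply: mulr_gt0; [lra | apply: mulr_gt0; lra].
have h2 : 0 <= (b - a) * ((a + b) * (- p)).
  by apply: mulr_ge0; [lra | apply: mulr_ge0; lra].
rewrite !expr2.
lra.
Qed.
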